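(* Let $c_0>0$, $c>0$, $d\in\mathbb Z^+$, and let $\boldsymbol\beta=(\beta_j)_{j\ge1}$ be a sequence of non-negative reals and $(\Upsilon_{\boldsymbol\nu})_{\boldsymbol\nu\in\mathscr F}$ non-negative reals with $\Upsilon_{\boldsymbol 0}\le c_0$ and, for all $\boldsymbol\nu\in\mathscr F$, $$\Upsilon_{\boldsymbol\nu}\le\sum_{\boldsymbol m\le\boldsymbol\nu,\,\boldsymbol m\ne\boldsymbol\nu}\binom{\boldsymbol\nu}{\boldsymbol m}\Upsilon_{\boldsymbol m}c^{|\boldsymbol\nu-\boldsymbol m|}\sum_{\boldsymbol\mu\le\boldsymbol\nu-\boldsymbol m}(|\boldsymbol\mu|+1)!\,\boldsymbol\mu!\,\boldsymbol\beta^{\boldsymbol\mu}\prod_{i\ge1}S(\nu_i-m_i,\mu_i)+c_0c^{|\boldsymbol\nu|}\sum_{\boldsymbol m\le\boldsymbol\nu}\frac{(|\boldsymbol m|+d)!}{d!}\boldsymbol\beta^{\boldsymbol m}\prod_{i\ge1}S(\nu_i,m_i).$$ Then for all $\boldsymbol\nu\in\mathscr F$, $$\Upsilon_{\boldsymbol\nu}\le c_0c^{|\boldsymbol\nu|}\sum_{\boldsymbol m\le\boldsymbol\nu}\mathbb P_{\boldsymbol m}\,\boldsymbol m!\,\boldsymbol\beta^{\boldsymbol m}\prod_{i\ge1}S(\nu_i,m_i),$$ where $\mathbb P_{\boldsymbol 0}:=1$ and $\mathbb P_{\boldsymbol m}:=\frac{(|\boldsymbol m|+d)!}{\boldsymbol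 m!\,d!}+\sum_{\boldsymbol w\le\boldsymbol m,\,\boldsymbol w\ne\boldsymbol m}\mathbb P_{\boldsymbol w}(|\boldsymbol m|-|\boldsymbol w|+1)!$ for $\boldsymbol m\ne\boldsymbol 0$. If the hypotheses hold with equality, so does the conclusion.
   Context: $\mathscr F$ is the set of finitely supported multi-indices in $\mathbb N_0^{\mathbb N}$; $|\boldsymbol\nu|=\sum\nu_j$, $\boldsymbol\nu!=\prod\nu_j!$, $\boldsymbol\beta^{\boldsymbol\nu}=\prod\beta_j^{\nu_j}$, componentwise order, $\binom{\boldsymbol\nu}{\boldsymbol m}=\prod_j\binom{\nu_j}{m_j}$. $S(n,m)=\frac1{m!}\sum_{j=0}^m(-1)^{m-j}\binom mj j^n$ (Stirling numbers of the second kind, $S(0,0)=1$). *)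

(* Defs.v *)
From HB Require Import structures.
From mathcomp Require Import all_boot all_order all_algebra.
From mathcomp Require Import finmap.
From mathcomp Require Import boolp classical_sets fsbigop.
From mathcomp Require Import reals.

Set Implicit Arguments.
Unset Strict Implicit.
Unset Printing Implicit Defensive.
Import Order.TTheory GRing.Theory Num.Theory.

Local Open Scope ring_scope.

(* The set F of finitely supported multi-indices N_0^N
   (coordinates indexed by nat, i.e. coordinate j here is coordinate j+1
   of the paper). *)
Definition mi := {fsfun nat -> nat with 0%N}.

Definition mzero : mi := [fsfun].

Definition mabs (nu : mi) : nat := (\sum_(j <- finsupp nu) nu j)%N.
Definition mfact (nu : mi) : nat := (\prod_(j <- finsupp nu) (nu j)`!)%N.
Definition mpow {R : nzRingType} (beta : nat -> R) (nu : mi) : R :=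
  \prod_(j <- finsupp nu) beta j ^+ nu j.
Definition mle (m nu : mi) : bool := all (fun j => (m j <= nu j)%N) (finsupp m).
Definition msub (nu m : mi) : mi := [fsfun j in finsupp nu => (nu j - m j)%N].
Definition mbinom (nu m : mi) : nat :=
  (\prod_(j <- (finsupp nu `|` finsupp m)%fset) 'C(nu j, m j))%N.

Definition stirling2 {R : fieldType} (n m : nat) : R :=
  (m`!%:R)^-1 * \sum_(j < m.+1) (-1) ^+ (m - j) * 'C(m, j)%:R * (j%:R) ^+ n.

(* prod_{i} S(a_i, b_i) (factors outside the supports are S(0,0) = 1) *)
Definition mstir {R : fieldType} (a b : mi) : R :=
  \prod_(j <- (finsupp a `|` finsupp b)%fset) stirling2 (a j) (b j).

(* The numbers P_m, defined by recursion on |m| (fuel k >= |m|). *)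
Fixpoint Pfuel (R : fieldType) (d : nat) (k : nat) (m : mi) {struct k} : R :=
  match k with
  | 0%N => 1
  | k'.+1 =>
      if m == mzero then 1
      else ((mabs m + d)`!)%:R / ((mfact m * d`!)%N)%:R
           + \sum_(w \in [set w | mle w m && (w != m)])
               Pfuel R d k' w * ((mabs m - mabs w + 1)`!)%:R
  end.

Definition PP {R : fieldType} (d : nat) (m : mi) : R := Pfuel R d (mabs m) m.

Definition rec_rhs {R : realType} (c0 c : R) (d : nat) (beta : nat -> R)
    (Ups : mi -> R) (nu : mi) : R :=
  \sum_(m \in [set m | mle m nu && (m != nu)])
     (mbinom nu m)%:R * Ups m * c ^+ mabs (msub nu m) *
     \sum_(mu \in [set mu | mle mu (msub nu m)])
        ((mabs mu).+1`!)%:R * (mfact mu)%:R * mpow beta mu * mstir (msub nu m) mu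
  + c0 * c ^+ mabs nu *
     \sum_(m \in [set m | mle m nu])
        ((mabs m + d)`!)%:R / (d`!)%:R * mpow beta m * mstir nu m.

Definition bound_rhs {R : realType} (c0 c : R) (d : nat) (beta : nat -> R)
    (nu : mi) : R :=
  c0 * c ^+ mabs nu *
    \sum_(m \in [set m | mle m nu])
       PP d m * (mfact m)%:R * mpow beta m * mstir nu m.

(* Main.v *)
Require Import Defs.
From HB Require Import structures.
From mathcomp Require Import all_boot all_order all_algebra.
From mathcomp Require Import finmap.
From mathcomp Require Import boolp classical_sets functions cardinality fsbigop.
From mathcomp Require Import reals.
From mathcomp Require Import ring lra.
Set Implicit Arguments.
Unset Strict Implicit.
Unset Printing Implicit Defensive.
Import Order.TTheory GRing.Theory Num.Theory.
Local Open Scope ring_scope.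

Definition Dd {R : fieldType} (m : nat) (g : nat -> R) : R :=
  \sum_(s < m.+1) (-1) ^+ (m - s) * 'C(m, s)%:R * g s.

Lemma Dd0 (R : fieldType) (g : nat -> R) : Dd 0 g = g 0%N.
Proof. by rewrite /Dd big_ord1 /= expr0 mul1r mul1r. Qed.

Lemma DdS (R : fieldType) m (g : nat -> R) :
  Dd m.+1 g = Dd m (fun s => g s.+1) - Dd m g.
Proof.
rewrite /Dd big_ord_recl /= subn0 bin0 mulr1.
have -> : \sum_(i < m.+1) (-1) ^+ (m.+1 - bump 0 i) * ('C(m.+1, bump 0 i))%:R * g (bump 0 i)
  = \sum_(i < m.+1) (-1) ^+ (m - i) * ('C(m, i))%:R * g i.+1
    + \sum_(i < m.+1) (-1) ^+ (m - i) * ('C(m, i.+1))%:R * g i.+1.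
  rewrite -big_split /=; apply: eq_bigr => i _.
  by rewrite /bump /= add1n subSS binS natrD mulrDr mulrDl addrC.
rewrite addrCA; congr (_ + _).
rewrite [X in _ = - X]big_ord_recl /= subn0 bin0 mulr1 opprD.
rewrite [X in _ + X = _]big_ord_recr /= bin_small ?ltnSn // mulr0 mul0r addr0.
rewrite exprS mulN1r mulNr; congr (_ + _).
rewrite -sumrN; apply: eq_bigr => i _.
rewrite /bump /= add1n subnS; case: (m - i)%N (subn_gt0 i m) => [|k].
  by rewrite ltn_ord.
by move=> _ /=; rewrite exprS !mulN1r !mulNr.
Qed.

Lemma DdC (R : fieldType) a b (g : nat -> R) :
  Dd a (fun i => Dd b (fun j => g (i + j)%N)) = Dd (a + b) g.
Proof.
elim: a g => [|a IH] g; first by rewrite Dd0.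
rewrite DdS addSn DdS -!IH; congr (Dd a _ - _).
Qed.

Lemma stirlingE (R : fieldType) n m :
  stirling2 (R := R) n m = (m`!%:R)^-1 * Dd m (fun j => j%:R ^+ n).
Proof. by []. Qed.

Lemma Dd_conv (R : fieldType) n a b :
  \sum_(k < n.+1) 'C(n, k)%:R * Dd a (fun i => i%:R ^+ k)
                              * Dd b (fun j => j%:R ^+ (n - k))
  = Dd a (fun i => Dd b (fun j => ((i + j)%N%:R : R) ^+ n)).
Proof.
rewrite /Dd.
transitivity (\sum_(k < n.+1) \sum_(i < a.+1) \sum_(j < b.+1)
   ((-1) ^+ (a - i) * 'C(a, i)%:R) * ((-1) ^+ (b - j) * 'C(b, j)%:R) *
   ('C(n, k)%:R * (i%:R ^+ k * j%:R ^+ (n - k)) : R)).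
  apply: eq_bigr => k _.
  rewrite -mulrA big_distrlr mulr_sumr; apply: eq_bigr => i _.
  rewrite mulr_sumr; apply: eq_bigr => j _ /=; ring.
rewrite exchange_big; apply: eq_bigr => i _.
rewrite exchange_big mulr_sumr; apply: eq_bigr => j _.
rewrite natrD addrC exprDn !mulr_sumr; apply: eq_bigr => k _.
rewrite -mulr_natl; ring.
Qed.

Lemma fact_neq0 (R : numFieldType) n : (n`!%:R : R) != 0.
Proof. by rewrite pnatr_eq0 -lt0n fact_gt0. Qed.

Lemma stir_conv (R : numFieldType) n a b :
  \sum_(k < n.+1) 'C(n, k)%:R * stirling2 (R := R) k a * stirling2 (n - k) b
  = 'C(a + b, a)%:R * stirling2 n (a + b).
Proof.
transitivity ((a`!%:R)^-1 * (b`!%:R)^-1 *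
  \sum_(k < n.+1) 'C(n, k)%:R * Dd a (fun i => i%:R ^+ k)
                              * Dd b (fun j => j%:R ^+ (n - k)) : R).
  rewrite mulr_sumr; apply: eq_bigr => k _; rewrite !stirlingE; ring.
rewrite Dd_conv (DdC a b (fun s => (s%:R : R) ^+ n)) stirlingE.
have h : (('C(a+b,a) * (a`! * b`!))%:R : R) = (a+b)`!%:R.
  by rewrite -{2}(addKn a b) bin_fact ?leq_addr.
rewrite -h !natrM mulrA; field.
by rewrite !fact_neq0 /= pnatr_eq0 -lt0n bin_gt0 leq_addr.
Qed.

Lemma stir0m (R : numFieldType) m : stirling2 (R := R) 0 m = (m == 0)%:R.
Proof.
rewrite stirlingE; case: m => [|m]; first by rewrite Dd0 expr0 invr1 mulr1.
by rewrite DdS subrr mulr0.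
Qed.

Lemma stirn1 (R : numFieldType) n : stirling2 (R := R) n 1 = (n != 0)%:R.
Proof.
rewrite stirlingE DdS !Dd0 expr1n expr0n /= factS fact0 muln1 invr1 mul1r.
by case: n => [|n] /=; rewrite ?subrr ?subr0.
Qed.

Lemma stir_rec (R : numFieldType) n a :
  stirling2 (R := R) n a.+1 =
  (a.+1%:R)^-1 * \sum_(k < n.+1) 'C(n, k)%:R * stirling2 (R := R) k a
                                   * (n - k != 0)%N%:R.
Proof.
have := stir_conv R n a 1; rewrite addn1 binSn => h.
have -> : \sum_(k < n.+1) 'C(n, k)%:R * stirling2 (R := R) k a * (n - k != 0)%N%:R
  = \sum_(k < n.+1) 'C(n, k)%:R * stirling2 (R := R) k a * stirling2 (n - k) 1.
  by apply: eq_bigr => k _; rewrite stirn1.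
rewrite h mulrA mulVf ?mul1r //.
by rewrite pnatr_eq0.
Qed.

Lemma stir_ge0 (R : numFieldType) n m : 0 <= stirling2 (R := R) n m.
Proof.
elim/ltn_ind: n m => n IH [|a].
  by rewrite stirlingE Dd0 fact0 invr1 mul1r expr0n; case: (n == 0%N).
rewrite stir_rec mulr_ge0 ?invr_ge0 ?ler0n // sumr_ge0 // => k _.
have [kn|kn] := ltnP k n.
  by rewrite mulr_ge0 ?ler0n // mulr_ge0 ?ler0n ?IH.
have -> : (n - k == 0)%N by rewrite subn_eq0.
by rewrite mulr0.
Qed.

Lemma stir_small (R : numFieldType) n m : (n < m)%N -> stirling2 (R := R) n m = 0.
Proof.
elim/ltn_ind: n m => n IH [|a] // lt_na.
rewrite stir_rec big1 ?mulr0 // => k _.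
have [kn|kn] := ltnP k n.
  by rewrite IH ?mulr0 ?mul0r // (leq_trans kn).
have -> : (n - k == 0)%N by rewrite subn_eq0.
by rewrite mulr0.
Qed.

Local Open Scope fset_scope.

Lemma mleP (m nu : mi) : reflect (forall j, (m j <= nu j)%N) (mle m nu).
Proof.
apply: (iffP allP) => [h j|h j _]; last exact: h.
have [jm|jm] := boolP (j \in finsupp m); first exact: h.
by rewrite fsfun_dflt.
Qed.

Lemma msubE (nu m : mi) j : msub nu m j = (nu j - m j)%N.
Proof.
rewrite /msub fsfunE; case: ifPn => // /fsfun_dflt -> //.
Qed.

Lemma mzeroE j : mzero j = 0%N.
Proof. by rewrite /mzero fsfunE. Qed.

Lemma supp_sub (x : mi) (U : {fset nat}) :
  (forall j, j \notin U -> x j = 0%N) -> finsupp x `<=` U.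
Proof.
move=> h; apply/fsubsetP => j; rewrite mem_finsupp; apply: contraR.
by move/h => ->.
Qed.

Lemma mle_supp (m nu : mi) : mle m nu -> finsupp m `<=` finsupp nu.
Proof.
move/mleP => h; apply: supp_sub => j /fsfun_dflt hj.
by apply/eqP; rewrite -leqn0 -[X in (_ <= X)%N]hj h.
Qed.

Lemma msub_supp (nu m : mi) : finsupp (msub nu m) `<=` finsupp nu.
Proof. by apply: supp_sub => j /fsfun_dflt hj; rewrite msubE hj. Qed.

Lemma mle_refl m : mle m m.
Proof. by apply/mleP. Qed.

Lemma mle_trans m n p : mle m n -> mle n p -> mle m p.
Proof. by move=> /mleP h1 /mleP h2; apply/mleP => j; exact: leq_trans (h1 j) (h2 j). Qed.

Lemma mle0 nu : mle mzero nu.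
Proof. by apply/mleP => j; rewrite mzeroE. Qed.

Lemma mle_sub nu m : mle (msub nu m) nu.
Proof. by apply/mleP => j; rewrite msubE leq_subr. Qed.

Lemma mle_anti m n : mle m n -> mle n m -> m = n.
Proof.
by move=> /mleP h1 /mleP h2; apply/fsfunP => j; apply/eqP; rewrite eqn_leq h1 h2.
Qed.

Lemma mabsE (U : {fset nat}) m : finsupp m `<=` U -> mabs m = (\sum_(j <- U) m j)%N.
Proof.
move=> sU; apply: big_fset_incl => // j _ /fsfun_dflt //.
Qed.

Lemma mfactE (U : {fset nat}) m : finsupp m `<=` U -> mfact m = (\prod_(j <- U) (m j)`!)%N.
Proof.
move=> sU; apply: big_fset_incl => // j _ /fsfun_dflt -> //.
Qed.

Lemma mpowE (R : comNzRingType) (beta : nat -> R) (U : {fset nat}) m :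
  finsupp m `<=` U -> mpow beta m = \prod_(j <- U) beta j ^+ m j.
Proof.
move=> sU; apply: big_fset_incl => // j _ /fsfun_dflt -> //.
Qed.

Lemma mbinomE (U : {fset nat}) nu m : finsupp nu `<=` U -> finsupp m `<=` U ->
  mbinom nu m = (\prod_(j <- U) 'C(nu j, m j))%N.
Proof.
move=> s1 s2; apply: big_fset_incl; first by rewrite fsubUset s1 s2.
move=> j _; rewrite in_fsetU negb_or => /andP[/fsfun_dflt -> /fsfun_dflt ->] //.
Qed.

Lemma mstirE (R : fieldType) (U : {fset nat}) a b : finsupp a `<=` U -> finsupp b `<=` U ->
  mstir (R := R) a b = \prod_(j <- U) stirling2 (a j) (b j).
Proof.
move=> s1 s2; apply: big_fset_incl; first by rewrite fsubUset s1 s2.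
move=> j _; rewrite in_fsetU negb_or => /andP[/fsfun_dflt -> /fsfun_dflt ->] /=.
by rewrite /stirling2 big_ord1 /= !expr0 invr1 !mul1r.
Qed.

Lemma finsupp_mzero : finsupp mzero = fset0.
Proof. by apply/fsetP => j; rewrite mem_finsupp mzeroE inE. Qed.

Lemma mabs_mzero : mabs mzero = 0%N.
Proof. by rewrite /mabs finsupp_mzero big_nil. Qed.

Lemma mfact_mzero : mfact mzero = 1%N.
Proof. by rewrite /mfact finsupp_mzero big_nil. Qed.

Lemma mpow_mzero (R : nzRingType) (beta : nat -> R) : mpow beta mzero = 1.
Proof. by rewrite /mpow finsupp_mzero big_nil. Qed.

Lemma mabs_sub m nu : mle m nu -> (mabs m + mabs (msub nu m))%N = mabs nu.
Proof.
move=> h; rewrite (mabsE (mle_supp h)) (mabsE (msub_supp nu m)) (mabsE (fsubset_refl _)).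
rewrite -big_split /=; apply: eq_bigr => j _.
by rewrite msubE subnKC //; move/mleP: h.
Qed.

Lemma mabs0 x : mabs x = 0%N -> x = mzero.
Proof.
move=> h; apply/fsfunP => j; rewrite mzeroE.
have [jx|jx] := boolP (j \in finsupp x); last by rewrite fsfun_dflt.
move: h; rewrite /mabs (bigD1_seq j) //= => /eqP; rewrite addn_eq0 => /andP[/eqP -> _] //.
Qed.

Lemma msub_id nu : msub nu nu = mzero.
Proof. by apply/fsfunP => j; rewrite msubE subnn mzeroE. Qed.

Lemma mabs_lt m nu : mle m nu -> m != nu -> (mabs m < mabs nu)%N.
Proof.
move=> h ne; rewrite -(mabs_sub h) -{1}[mabs m]addn0 ltn_add2l lt0n.
apply: contra ne => /eqP/mabs0 h0; apply/eqP/fsfunP => j.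
move/fsfunP: h0 => /(_ j); rewrite msubE mzeroE => /eqP; rewrite subn_eq0 => h1.
by apply/eqP; rewrite eqn_leq h1 andbT; move/mleP: h.
Qed.

Definition madd (a b : mi) : mi := [fsfun j in (finsupp a `|` finsupp b) => (a j + b j)%N].

Lemma maddE a b j : madd a b j = (a j + b j)%N.
Proof.
rewrite /madd fsfunE; case: ifPn => //; rewrite in_fsetU negb_or.
by case/andP => /fsfun_dflt -> /fsfun_dflt ->.
Qed.

Local Open Scope fset_scope.

Definition upd (m : mi) (j k : nat) : mi := [fsfun m with j |-> k].

Lemma updE m j k i : upd m j k i = if i == j then k else m i.
Proof. exact: fsfun_withE. Qed.

Lemma box (R : idomainType) (s : seq nat) : uniq s -> forall nu : mi,
  {subset finsupp nu <= s} ->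
  finite_set [set m | mle m nu] /\ forall f : nat -> nat -> R,
  \sum_(m \in [set m | mle m nu]) \prod_(j <- s) f j (m j)
    = \prod_(j <- s) \sum_(k < (nu j).+1) f j k.
Proof.
elim: s => [|j s IH] /=.
  move=> _ nu snu.
  have nu0 : nu = mzero.
    apply/fsfunP => i; rewrite mzeroE; apply: fsfun_dflt; apply/negP => /snu.
    by rewrite in_nil.
  have -> : [set m | mle m nu]%classic = [set mzero]%classic.
    apply/seteqP; split => m /=; last by move=> ->; exact: mle0.
    by rewrite nu0 => h; apply: mle_anti h (mle0 _).
  split; first exact: finite_set1.
  by move=> f; rewrite fsbig_set1 !big_nil.
case/andP => js us nu snu.
pose nu' := upd nu j 0.
have snu' : {subset finsupp nu' <= s}.
  move=> i; rewrite mem_finsupp updE; case: (eqVneq i j) => [->|ij]; first by rewrite eqxx.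
  move=> nui; have : i \in j :: s by apply: snu; rewrite mem_finsupp.
  by rewrite inE (negPf ij).
have [fin' sum'] := IH us nu' snu'.
pose h := fun p : mi * nat => upd p.1 j p.2.
have bij : set_bij ([set m | mle m nu'] `*` `I_(nu j).+1) [set m | mle m nu] h.
  split.
  - move=> [m k] /= [/mleP hm hk]; apply/mleP => i; rewrite updE.
    case: eqP => [->//|/eqP ij]; by move: (hm i); rewrite updE (negPf ij).
  - move=> [m1 k1] [m2 k2]; rewrite !inE /= => -[/mleP h1 _] [/mleP h2 _] e.
    have ek : k1 = k2 by move/fsfunP: e => /(_ j); rewrite !updE eqxx.
    congr (_, _) => //; apply/fsfunP => i.
    case: (eqVneq i j) => [->|ij].
      by move: (h1 j) (h2 j); rewrite !updE eqxx !leqn0 => /eqP -> /eqP ->.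
    by move/fsfunP: e => /(_ i); rewrite !updE (negPf ij).
  - move=> m /= /mleP hm; exists (upd m j 0, m j) => /=.
      split; last by rewrite /= ltnS hm.
      by apply/mleP => i; rewrite !updE; case: eqP.
    by apply/fsfunP => i; rewrite !updE; case: eqP => // ->.
split.
  apply: (sub_finite_set (B := h @` ([set m | mle m nu'] `*` `I_(nu j).+1))).
    by case: bij.
  by apply: finite_image; apply: finite_setX => //; exact: finite_II.
move=> f.
rewrite (reindex_fsbig h _ _ _ bij).
rewrite -(pair_fsbig _ (fun m k => \prod_(i <- j :: s) f i (upd m j k i))); last exact: finite_II; last exact: fin'.
rewrite big_cons [X in _ = X * _]fsbig_ord.
rewrite [X in _ = _ * X](eq_big_seq (fun i => \sum_(k < (nu' i).+1) f i k)); last first.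
  by move=> i iS; rewrite /nu' updE; case: eqP => // eij; move: js; rewrite -eij iS.
rewrite -sum' mulr_fsumr; apply: eq_fsbigr => m _.
rewrite mulr_fsuml; apply: eq_fsbigr => k _ /=.
rewrite big_cons updE eqxx; congr (_ * _).
rewrite big_seq_cond [RHS]big_seq_cond; apply: eq_bigr => i /andP[iS _].
by rewrite updE; case: eqP => // eij; move: js; rewrite -eij iS.
Qed.

Lemma Afin nu : finite_set [set m | mle m nu].
Proof. by have [] := @box int _ (fset_uniq (finsupp nu)) nu (fun j h => h). Qed.

Lemma box_prod (R : idomainType) (U : {fset nat}) nu (f : nat -> nat -> R) :
  finsupp nu `<=` U ->
  \sum_(m \in [set m | mle m nu]) \prod_(j <- U) f j (m j)
    = \prod_(j <- U) \sum_(k < (nu j).+1) f j k.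
Proof.
move=> sU; have [_ ->] := @box R _ (fset_uniq U) nu (fsubsetP sU).
by [].
Qed.

Lemma mconv (R : numFieldType) nu v w : mle w v ->
  \sum_(m \in [set m | mle m nu]) (mbinom nu m)%:R * mstir (R := R) m w
        * mstir (msub nu m) (msub v w)
  = (mbinom v w)%:R * mstir nu v.
Proof.
move=> hwv; pose U := finsupp nu `|` finsupp v.
have sn : finsupp nu `<=` U by rewrite fsubsetUl.
have sv : finsupp v `<=` U by rewrite fsubsetUr.
have sw : finsupp w `<=` U by apply: fsubset_trans (mle_supp hwv) sv.
have svw : finsupp (msub v w) `<=` U by apply: fsubset_trans (msub_supp v w) sv.
rewrite (mbinomE sv sw) (mstirE _ sn sv) natr_prod -big_split /=.
transitivity (\sum_(m \in [set m | mle m nu]) \prod_(j <- U)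
   ('C(nu j, m j)%:R * stirling2 (R := R) (m j) (w j) * stirling2 (nu j - m j) (v j - w j))).
  apply: eq_fsbigr => m; rewrite inE /= => hm.
  have sm : finsupp m `<=` U by apply: fsubset_trans (mle_supp hm) sn.
  have snm : finsupp (msub nu m) `<=` U by apply: fsubset_trans (msub_supp nu m) sn.
  rewrite (mbinomE sn sm) (mstirE _ sm sw) (mstirE _ snm svw) natr_prod -!big_split /=.
  by apply: eq_bigr => j _; rewrite !msubE.
rewrite (@box_prod R U nu (fun j k => 'C(nu j, k)%:R * stirling2 (R := R) k (w j) * stirling2 (nu j - k) (v j - w j))) //; apply: eq_bigr => j _.
move/mleP: hwv => /(_ j) hj.
have := stir_conv R (nu j) (w j) (v j - w j); rewrite subnKC // => <-.
Qed.
Local Close Scope fset_scope.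
Local Close Scope fset_scope.

Lemma Pfuel0 (R : fieldType) d k : Pfuel R d k mzero = 1.
Proof. by case: k => //= k; rewrite eqxx. Qed.

Lemma Pfuel_eq (R : fieldType) d k k' m :
  (mabs m <= k)%N -> (mabs m <= k')%N -> Pfuel R d k m = Pfuel R d k' m.
Proof.
elim: k k' m => [|k IH] k' m.
  rewrite leqn0 => /eqP/mabs0 -> _; by rewrite !Pfuel0.
case: k' => [|k'].
  rewrite leqn0 => _ /eqP/mabs0 ->; by rewrite !Pfuel0.
move=> hk hk' /=; case: (m == mzero) => //; congr (_ + _)%R.
apply: eq_fsbigr => w; rewrite inE /= => /andP[hw ne].
have lt := mabs_lt hw ne.
by rewrite (IH k') // -ltnS (leq_trans lt).
Qed.

Lemma PP_eq (R : fieldType) d m : m != mzero ->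
  PP (R := R) d m = ((mabs m + d)`!)%:R / ((mfact m * d`!)%N)%:R
     + \sum_(w \in [set w | mle w m && (w != m)])
          PP (R := R) d w * ((mabs m - mabs w + 1)`!)%:R.
Proof.
move=> ne; have pos : (0 < mabs m)%N.
  by rewrite lt0n; apply: contra ne => /eqP/mabs0 ->.
rewrite {1}/PP -(prednK pos) /= (negPf ne); congr (_ + _)%R.
  by rewrite prednK.
rewrite (prednK pos); apply: eq_fsbigr => w; rewrite inE /= => /andP[hw ne'].
have lt := mabs_lt hw ne'.
by rewrite /PP (Pfuel_eq _ _ _ (leqnn _)) // -ltnS (prednK pos).
Qed.

Lemma PP0 (R : fieldType) d : PP (R := R) d mzero = 1.
Proof. by rewrite /PP Pfuel0. Qed.

Lemma PPZ (R : numFieldType) d v :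
  \sum_(w \in [set w | mle w v]) PP (R := R) d w * ((mabs v - mabs w + 1)`!)%:R
  = 2 * PP d v - ((mabs v + d)`!)%:R / ((mfact v * d`!)%N)%:R.
Proof.
rewrite (fsbigD1 v) ?Afin //=; last exact: mle_refl.
rewrite subnn add0n mulr1.
have -> : ([set w | mle w v] `\ v)%classic = [set w | mle w v && (w != v)]%classic.
  by apply/seteqP; split => w /=; [case=> h /eqP ne; rewrite h | case/andP=> h /eqP ne].
have [->|ne] := eqVneq v mzero.
  have -> : [set w | mle w mzero && (w != mzero)]%classic = set0.
    apply/seteqP; split => w //= /andP[h /eqP ne]; apply: ne.
    exact: mle_anti h (mle0 _).
  rewrite fsbig_set0 PP0 mabs_mzero mfact_mzero mul1n add0n divff ?fact_neq0 //.
  by rewrite addr0 mulr1 -addrA subrr addr0.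
rewrite (@PP_eq R d v ne); set c := _ / _; set S := \sum_(_ \in _) _.
  by rewrite mulr2n; ring.
exact: Afin.
Qed.

Lemma mstir_zero (R : numFieldType) a b : ~~ mle b a -> mstir (R := R) a b = 0.
Proof.
case/allPn => j jb /=; rewrite -ltnNge => lt.
rewrite /mstir (bigD1_seq j) ?fset_uniq //=; last by rewrite in_fsetU jb orbT.
by rewrite stir_small // mul0r.
Qed.

Lemma A0 : [set m | mle m mzero]%classic = [set mzero]%classic.
Proof.
apply/seteqP; split => m /=; last by move=> ->; exact: mle0.
by move=> h; apply: mle_anti h (mle0 _).
Qed.

Lemma fact_split w v : mle w v -> (mfact w * mfact (msub v w) * mbinom v w)%N = mfact v.
Proof.
move=> h; have sw := mle_supp h; have ss := msub_supp v w; have sv := fsubset_refl (finsupp v).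
rewrite (mfactE sw) (mfactE ss) (mfactE sv) (mbinomE sv sw) -!big_split /=.
apply: eq_bigr => j _; rewrite msubE mulnC bin_fact //.
by move/mleP: h.
Qed.

Lemma pow_split (R : comNzRingType) (beta : nat -> R) w v : mle w v ->
  mpow beta w * mpow beta (msub v w) = mpow beta v.
Proof.
move=> h; have sw := mle_supp h; have ss := msub_supp v w; have sv := fsubset_refl (finsupp v).
rewrite (mpowE _ sw) (mpowE _ ss) (mpowE _ sv) -big_split /=.
apply: eq_bigr => j _; rewrite msubE -exprD subnKC //.
by move/mleP: h.
Qed.

Lemma mbinom_id nu : mbinom nu nu = 1%N.
Proof. by rewrite /mbinom big1 // => j _; rewrite binn. Qed.

Lemma mstir00 (R : fieldType) : mstir (R := R) mzero mzero = 1.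
Proof. by rewrite /mstir finsupp_mzero fsetU0 big_nil. Qed.

Definition Vset (nu w : mi) : set mi :=
  ([set v | mle v nu] `&` [set v | mle w v])%classic.

Lemma Vbij nu w : mle w nu ->
  set_bij (Vset nu w) [set mu | mle mu (msub nu w)]%classic (fun v => msub v w).
Proof.
move=> hw; split.
- move=> v [/mleP h1 /mleP h2] /=; apply/mleP => j; rewrite !msubE.
  by rewrite leq_sub2r.
- move=> v1 v2; rewrite !inE => -[_ /mleP h1] [_ /mleP h2] e.
  apply/fsfunP => j; move/fsfunP: e => /(_ j); rewrite !msubE => e.
  by rewrite -(subnK (h1 j)) e subnK.
- move=> mu /= /mleP hmu; exists (madd mu w).
    split; apply/mleP => j; rewrite maddE ?leq_addl //.
    by move: (hmu j); rewrite msubE -(leq_add2r (w j)) subnK //; move/mleP: hw.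
  by apply/fsfunP => j; rewrite msubE maddE addnK.
Qed.

Lemma H_reindex (R : numFieldType) (g : mi -> R) nu m w : mle w m -> mle m nu ->
  \sum_(mu \in [set mu | mle mu (msub nu m)]) g mu * mstir (msub nu m) mu
  = \sum_(v \in Vset nu w) g (msub v w) * mstir (msub nu m) (msub v w).
Proof.
move=> hwm hmn; have hwn := mle_trans hwm hmn.
rewrite (fsbig_widen _ [set mu | mle mu (msub nu w)]%classic); first last.
- move=> mu [/= h1 h2]; rewrite /preimage /= mstir_zero ?mulr0 //.
  by apply/negP.
- move=> mu /= /mleP h; apply/mleP => j; apply: leq_trans (h j) _.
  by rewrite !msubE leq_sub2l //; move/mleP: hwm.
by rewrite (reindex_fsbig _ _ _ _ (Vbij hwn)).
Qed.

Definition Ff (R : numFieldType) d (beta : nat -> R) (m : mi) : R :=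
  \sum_(w \in [set w | mle w m]) PP d w * (mfact w)%:R * mpow beta w * mstir m w.

Definition Gf (R : numFieldType) (beta : nat -> R) (mu : mi) : R :=
  ((mabs mu).+1`!)%:R * (mfact mu)%:R * mpow beta mu.

Definition Hf (R : numFieldType) (beta : nat -> R) (x : mi) : R :=
  \sum_(mu \in [set mu | mle mu x]) Gf beta mu * mstir x mu.

Definition Zf (R : numFieldType) d (v : mi) : R :=
  \sum_(w \in [set w | mle w v]) PP (R := R) d w * ((mabs v - mabs w + 1)`!)%:R.

Lemma Vfin nu w : finite_set (Vset nu w).
Proof. by apply: sub_finite_set (Afin nu) => v []. Qed.

Lemma star (R : numFieldType) d (beta : nat -> R) nu :
  \sum_(m \in [set m | mle m nu]) (mbinom nu m)%:R * Ff d beta m * Hf beta (msub nu m)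
  = \sum_(v \in [set v | mle v nu]) (mfact v)%:R * mpow beta v * mstir nu v * Zf R d v.
Proof.
pose K m w v := (mbinom nu m)%:R * (PP (R := R) d w * (mfact w)%:R * mpow beta w * mstir m w)
   * (Gf beta (msub v w) * mstir (msub nu m) (msub v w)).
pose L w v := PP (R := R) d w * ((mabs v - mabs w + 1)`!)%:R *
   ((mfact v)%:R * mpow beta v * mstir nu v).
transitivity (\sum_(m \in [set m | mle m nu]) \sum_(w \in [set w | mle w nu])
   \sum_(v \in Vset nu w) K m w v).
  apply: eq_fsbigr => m; rewrite inE /= => hm.
  rewrite /Ff (fsbig_widen _ [set w | mle w nu]%classic); first last.
  - move=> w [/= h1 h2]; rewrite /preimage /= mstir_zero ?mulr0 //.
    by apply/negP.
  - by move=> w /= hw; exact: mle_trans hw hm.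
  rewrite (mulr_fsumr (mbinom nu m)%:R) (mulr_fsuml (Hf beta (msub nu m))); apply: eq_fsbigr => w; rewrite inE /= => hw.
  have [hwm|hwm] := boolP (mle w m).
    rewrite /Hf (H_reindex (Gf beta) hwm hm) mulr_fsumr.
    by apply: eq_fsbigr => v _.
  rewrite mstir_zero // mulr0 mulr0 mul0r fsbig1 // => v _.
  by rewrite /K mstir_zero // mulr0 mulr0 mul0r.
rewrite (exchange_fsbig _ _ (Afin nu) (Afin nu)).
transitivity (\sum_(w \in [set w | mle w nu]) \sum_(v \in Vset nu w) L w v).
  apply: eq_fsbigr => w; rewrite inE /= => hw.
  rewrite (exchange_fsbig _ _ (Afin nu) (Vfin nu w)).
  apply: eq_fsbigr => v; rewrite inE => -[/= hv hwv].
  transitivity (PP (R := R) d w * (mfact w)%:R * mpow beta w * Gf beta (msub v w) *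
    \sum_(m \in [set m | mle m nu]) (mbinom nu m)%:R * mstir (R := R) m w
        * mstir (msub nu m) (msub v w)).
    rewrite mulr_fsumr; apply: eq_fsbigr => m _; rewrite /K; ring.
  rewrite mconv // /L /Gf.
  have e : (mabs (msub v w)).+1 = (mabs v - mabs w + 1)%N.
    by rewrite -(mabs_sub hwv) addKn addn1.
  rewrite e; set f := (_ + 1)`!%N.
  rewrite -(fact_split hwv) -(pow_split beta hwv) !natrM; ring.
rewrite /Vset; under eq_fsbigr do rewrite fsbig_mkcondr.
rewrite (exchange_fsbig _ _ (Afin nu) (Afin nu)).
apply: eq_fsbigr => v; rewrite inE /= => hv.
transitivity (\sum_(w \in ([set w | mle w nu] `&` [set w | mle w v])%classic) L w v).
  by rewrite fsbig_mkcondr; apply: eq_fsbigr => w _; rewrite !mem_setE.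
transitivity (\sum_(w \in [set w | mle w v]) L w v).
  apply: eq_fsbigl; apply/seteqP; split => w /=; first by case.
  by move=> h; split=> //; exact: mle_trans h hv.
rewrite /Zf mulr_fsumr; apply: eq_fsbigr => w _; rewrite /L; ring.
Qed.

Lemma Hf0 (R : numFieldType) (beta : nat -> R) : Hf beta mzero = 1.
Proof.
rewrite /Hf A0 fsbig_set1 /Gf mabs_mzero mfact_mzero mpow_mzero mstir00.
by rewrite !mulr1.
Qed.


Lemma key (R : realType) c0 c d (beta : nat -> R) nu :
  rec_rhs c0 c d beta (bound_rhs c0 c d beta) nu = bound_rhs c0 c d beta nu.
Proof.
pose X m := (mbinom nu m)%:R * Ff d beta m * Hf beta (msub nu m).
have e1 : \sum_(m \in [set m | mle m nu && (m != nu)])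
     (mbinom nu m)%:R * bound_rhs c0 c d beta m * c ^+ mabs (msub nu m) *
     \sum_(mu \in [set mu | mle mu (msub nu m)])
        ((mabs mu).+1`!)%:R * (mfact mu)%:R * mpow beta mu * mstir (msub nu m) mu
   = c0 * c ^+ mabs nu * \sum_(m \in [set m | mle m nu && (m != nu)]) X m.
  rewrite mulr_fsumr; apply: eq_fsbigr => m; rewrite inE /= => /andP[hm _].
  rewrite /X -/(Hf beta (msub nu m)) /bound_rhs -/(Ff d beta m) -(mabs_sub hm) exprD.
  set a := Ff d beta m; set b := Hf beta (msub nu m); set u := c ^+ mabs m; set u2 := c ^+ _; set bb := (mbinom nu m)%:R.
  ring.
rewrite /rec_rhs e1 {1}/bound_rhs -/(Ff d beta nu) -mulrDr; congr (_ * _).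
have eA : ([set m | mle m nu] `\ nu)%classic = [set m | mle m nu && (m != nu)]%classic.
  by apply/seteqP; split => w /=; [case=> h /eqP ne; rewrite h | case/andP=> h /eqP ne].
have full : \sum_(m \in [set m | mle m nu]%classic) X m
    = X nu + \sum_(m \in ([set m | mle m nu] `\ nu)%classic) X m.
  by apply: fsbigD1; [exact: Afin | exact: mle_refl].
have Xnu : X nu = Ff d beta nu by rewrite /X msub_id Hf0 mbinom_id mul1r mulr1.
rewrite Xnu eA in full.
have st : \sum_(m \in [set m | mle m nu]%classic) X m = 
  \sum_(v \in [set v | mle v nu]) (mfact v)%:R * mpow beta v * mstir nu v * Zf R d v
  := star d beta nu.
have e2 : \sum_(v \in [set v | mle v nu]) (mfact v)%:R * mpow beta v * mstir nu v * Zf R d v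
  = 2 * Ff d beta nu - \sum_(m \in [set m | mle m nu])
        ((mabs m + d)`!)%:R / (d`!)%:R * mpow beta m * mstir nu m.
  rewrite /Ff !(fsbig_finite _ _ (Afin nu)) mulr_sumr -sumrB; apply: eq_bigr => v _.
  rewrite /Zf PPZ natrM.
  have hf : ((mfact v)%:R : R) != 0.
    by rewrite pnatr_eq0 -lt0n; apply: prodn_gt0 => j; exact: fact_gt0.
  have hg : ((d`!)%:R : R) != 0 by exact: fact_neq0.
  move: hf hg; set a := PP d v; set f := (mfact v)%:R; set g := d`!%:R.
  set h := (_ + d)`!%:R; set p := mpow beta v; set q := mstir nu v => hf hg.
  by field; rewrite hf hg.
move: full; rewrite st e2.
set A1 := \sum_(m \in _) _; set A2 := \sum_(m \in _) _; set F := Ff d beta nu.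
move=> full; clear -full; lra.
Qed.

Lemma rec_mono (R : realType) c0 c d (beta : nat -> R) (U1 U2 : mi -> R) nu :
  0 <= c -> (forall j, 0 <= beta j) ->
  (forall m, mle m nu && (m != nu) -> U1 m <= U2 m) ->
  rec_rhs c0 c d beta U1 nu <= rec_rhs c0 c d beta U2 nu.
Proof.
move=> c0' bp hU; rewrite /rec_rhs lerD2r.
have fin' : finite_set [set m | mle m nu && (m != nu)]%classic.
  by apply: sub_finite_set (Afin nu) => m /= /andP[].
rewrite !(fsbig_finite _ _ fin') big_seq [X in _ <= X]big_seq.
apply: ler_sum => m; rewrite in_fset_set // inE /= => hm.
have hH : 0 <= \sum_(mu \in [set mu | mle mu (msub nu m)])
        ((mabs mu).+1`!)%:R * (mfact mu)%:R * mpow beta mu * mstir (msub nu m) mu.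
  apply: fsumr_ge0 => mu _.
  rewrite !mulr_ge0 ?ler0n //.
  all: try (apply: prodr_ge0 => j _; by rewrite ?exprn_ge0 ?stir_ge0).
apply: (ler_wpM2r hH); apply: (ler_wpM2r (exprn_ge0 _ c0')).
by apply: (ler_wpM2l (ler0n _ _)); exact: hU.
Qed.

Lemma rec_eq (R : realType) c0 c d (beta : nat -> R) (U1 U2 : mi -> R) nu :
  (forall m, mle m nu && (m != nu) -> U1 m = U2 m) ->
  rec_rhs c0 c d beta U1 nu = rec_rhs c0 c d beta U2 nu.
Proof.
move=> hU; rewrite /rec_rhs; congr (_ + _).
by apply: eq_fsbigr => m; rewrite inE /= => hm; rewrite hU.
Qed.

Unset Implicit Arguments.
Theorem lemmaA5 (R : realType) (c0 c : R) (d : nat) (beta : nat -> R)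
    (Ups : mi -> R) :
  0 < c0 -> 0 < c -> (0 < d)%N ->
  (forall j, 0 <= beta j) ->
  (forall nu, 0 <= Ups nu) ->
  Ups mzero <= c0 ->
  (forall nu, Ups nu <= rec_rhs c0 c d beta Ups nu) ->
  (forall nu, Ups nu <= bound_rhs c0 c d beta nu) /\
  (Ups mzero = c0 -> (forall nu, Ups nu = rec_rhs c0 c d beta Ups nu) ->
   forall nu, Ups nu = bound_rhs c0 c d beta nu).
Proof.
move=> c0p cp dp bp Up U0 Hrec; split.
  suff P : forall n nu, mabs nu = n -> Ups nu <= bound_rhs c0 c d beta nu.
    by move=> nu; exact: P.
  elim/ltn_ind => n IH nu en.
  apply: le_trans (Hrec nu) _; rewrite -key.
  apply: rec_mono => //; first exact: ltW.
  move=> m /andP[hm ne]; apply: (IH (mabs m)) => //.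
  by rewrite -en; exact: mabs_lt.
move=> _ Heq.
suff P : forall n nu, mabs nu = n -> Ups nu = bound_rhs c0 c d beta nu.
  by move=> nu; exact: P.
elim/ltn_ind => n IH nu en.
rewrite Heq -key; apply: rec_eq => m /andP[hm ne]; apply: (IH (mabs m)) => //.
by rewrite -en; exact: mabs_lt.
Qed.
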